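(* Let $G=(V,E)$ be an undirected unweighted network with girth $g$, let $S\subseteq V$ and let $k$ be a natural number. Let $M$ be the value computed by procedure Estimate$(G,S,k)$ (described in the context). Then $g\le M$, and if $\mathcal{C}\neq\emptyset$ then $M\le 2d(S)+g$.
   Context: Vertices have distinct identifiers $ID(\cdot)$; $d(u,v)$ is the hop distance. A vertex $v$ is closer to $u$ than $w$ if $d(u,v)<d(u,w)$, or $d(u,v)=d(u,w)$ and $ID(v)<ID(w)$. For $v\in V$, $U(S,k,v)$ is the set of the $k$ vertices of $S$ closest to $v$, or $S$ itself if $|S|\le k$. A source $s\in S$ covers a cycle $C$ if $s\in U(S,k,v)$ for all $v\in V(C)$; then $d(s,C)=\min_{v\in V(C)}d(s,v)$ and, for a covered cycle, $d(S,C)=\min\{d(s,C): s\in S \text{ covers } C\}$. $\mathcal{C}$ is the set of shortest cycles of $G$ covered by some source, and when $\mathcal{C}\neq\emptyset$, $d(S)=\min\{d(S,C):C\in\mathcal{C}\}$. Procedure Estimate$(G,S,k)$: (i) partial BFS trees rooted at the sources are built so that each vertex $v$ learns $U(S,k,v)$ together with $d(s,v)$ and a BFS parent $p(s,v)$ (a neighbor of $v$ with $d(s,p(s,v))=d(s,v)-1$; undefined if $v=s$) for each $s\in U(S,k,v)$; (ii) each vertex sends this information to its neighbors; (iii) each vertex $y$ sets $M_y=\min\, (d(s,x)+d(s,y)+1)$ over all neighbors $x$ of $y$ and all $s\in U(S,k,y)\cap U(S,k,x)$ with $p(s,x)\neq y$ and $p(s,y)\neq x$ ($M_y=\infty$ if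 there are none); (iv) $M=\min_{v\in V}M_v$ is computed and made known to all vertices. The girth $g$ is $\infty$ if $G$ is acyclic. *)

(* Defs.v *)
From mathcomp Require Import all_boot.
Set Implicit Arguments. Unset Strict Implicit. Unset Printing Implicit Defensive.

Section Defs.
Variable T : finType.
Variable e : rel T.
Variable ID : T -> nat.

(* Extended naturals: None = infinity. *)
Definition oleq (a b : option nat) : bool :=
  match a, b with
  | _, None => true
  | None, Some _ => false
  | Some m, Some n => m <= n
  end.
Definition omin (a b : option nat) : option nat := if oleq a b then a else b.

Fixpoint ball (u : T) (n : nat) : {set T} :=
  match n with
  | 0 => [set u]
  | n'.+1 => ball u n' :|: [set y | [exists x in ball u n', e x y]]
  end.

(* hop distance (meaningful for connected graphs: every distance is < #|T|) *)
Definition dist (u v : T) : nat := find (fun n => v \in ball u n) (iota 0 #|T|).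

Definition closer (u v w : T) : bool :=
  (dist u v < dist u w) || ((dist u v == dist u w) && (ID v < ID w)).

(* U(S,k,v): the k vertices of S closest to v (all of S if |S| <= k) *)
Definition Uset (S : {set T}) (k : nat) (v : T) : {set T} :=
  [set s in S | #|[set t in S | closer v t s]| < k].

Definition is_cycle (C : seq T) : bool := (2 < size C) && ucycleb e C.

Definition has_cycle_len (n : nat) : bool := [exists t : n.-tuple T, is_cycle t].

Definition girth : option nat :=
  \big[omin/None]_(n < #|T|.+1 | has_cycle_len n) Some (n : nat).

Definition is_shortest_cycle (C : seq T) : bool :=
  is_cycle C && (girth == Some (size C)).

Definition covers (S : {set T}) (k : nat) (s : T) (C : seq T) : bool :=
  all (fun v => s \in Uset S k v) C.

Definition dist_cycle (s : T) (C : seq T) : option nat :=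
  \big[omin/None]_(v <- C) Some (dist s v).

Definition dS (S : {set T}) (k : nat) : option nat :=
  \big[omin/None]_(n < #|T|.+1)
    \big[omin/None]_(t : n.-tuple T | is_shortest_cycle t)
      \big[omin/None]_(s in S | covers S k s t) dist_cycle s t.

(* BFS parents: p s v = None encodes "undefined" (v = s) *)
Definition valid_parents (S : {set T}) (k : nat) (p : T -> T -> option T) : Prop :=
  forall s v, s \in S -> s \in Uset S k v ->
    if v == s then p s v = None
    else exists w, p s v = Some w /\ e v w /\ (dist s w).+1 = dist s v.

Definition Mvert (S : {set T}) (k : nat) (p : T -> T -> option T) (y : T)
  : option nat :=
  \big[omin/None]_(x | e y x)
    \big[omin/None]_(s in Uset S k y :&: Uset S k x
                      | (p s x != Some y) && (p s y != Some x))
      Some (dist s x + dist s y + 1).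

Definition Mval (S : {set T}) (k : nat) (p : T -> T -> option T) : option nat :=
  \big[omin/None]_(y : T) Mvert S k p y.

End Defs.

(* Main.v *)
Require Import Defs.
From mathcomp Require Import all_boot zify.
Set Implicit Arguments. Unset Strict Implicit. Unset Printing Implicit Defensive.

Lemma oleq_trans a b c : oleq a b -> oleq b c -> oleq a c.
Proof. by case: a; case: b; case: c => //= x y z; apply: leq_trans. Qed.

Lemma oleq_refl a : oleq a a.
Proof. by case: a => /=. Qed.

Lemma omin_l a b : oleq (omin a b) a.
Proof. rewrite /omin; case: ifP => [_|]; first exact: oleq_refl.
by case: a; case: b => //= x y /negbT; lia. Qed.

Lemma omin_r a b : oleq (omin a b) b.
Proof. rewrite /omin; case: ifP => // _; exact: oleq_refl. Qed.

Lemma big_omin_le (I : eqType) (r : seq I) (P : pred I) (F : I -> option nat) j :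
  j \in r -> P j -> oleq (\big[omin/None]_(i <- r | P i) F i) (F j).
Proof.
elim: r => // a r IH; rewrite inE big_cons => /orP[/eqP-> | jr] Pj.
  by rewrite Pj; apply: omin_l.
case: ifP => _; last exact: IH.
exact: oleq_trans (omin_r _ _) (IH jr Pj).
Qed.

Lemma big_omin_glb (I : Type) (r : seq I) (P : pred I) (F : I -> option nat) b :
  (forall i, P i -> oleq b (F i)) -> oleq b (\big[omin/None]_(i <- r | P i) F i).
Proof.
move=> H; elim: r => [|a r IH]; first by rewrite big_nil; case: (b).
rewrite big_cons; case: ifP => // Pa; rewrite /omin; case: ifP => _ //; exact: H.
Qed.

Lemma big_omin_attain (I : eqType) (r : seq I) (P : pred I) (F : I -> option nat) :
  \big[omin/None]_(i <- r | P i) F i = None \/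
  exists i, [/\ i \in r, P i & \big[omin/None]_(i <- r | P i) F i = F i].
Proof.
elim: r => [|a r IH]; first by left; rewrite big_nil.
rewrite big_cons; case: ifP => Pa.
  rewrite /omin; case: ifP => _.
    by right; exists a; rewrite mem_head.
  case: IH => [->|[i [ir Pi ->]]]; first by left.
  by right; exists i; rewrite inE ir orbT.
case: IH => [->|[i [ir Pi ->]]]; first by left.
by right; exists i; rewrite inE ir orbT.
Qed.

Section Dist.
Variable T : finType.
Variable e : rel T.
Hypothesis e_sym : symmetric e.
Hypothesis e_conn : forall u v : T, connect e u v.

Lemma ball_mono u m n : m <= n -> {subset ball e u m <= ball e u n}.
Proof.
elim: n => [|n IH]; first by rewrite leqn0 => /eqP->.
rewrite leq_eqVlt => /orP[/eqP-> //|]; rewrite ltnS => /IH H x /H xm.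
by rewrite /= inE xm.
Qed.

Lemma ball_step u n x y : x \in ball e u n -> e x y -> y \in ball e u n.+1.
Proof. by move=> xb exy; rewrite /= !inE; apply/orP; right; apply/existsP; exists x; rewrite xb. Qed.

Lemma ball_S u n y : y \in ball e u n.+1 ->
  y \in ball e u n \/ exists x, x \in ball e u n /\ e x y.
Proof.
rewrite /= !inE => /orP[->|/existsP[x /andP[xb exy]]]; first by left.
by right; exists x.
Qed.

Lemma ball0 u v : (v \in ball e u 0) = (v == u).
Proof. by rewrite /= inE. Qed.

Lemma ball_path u p : path e u p -> last u p \in ball e u (size p).
Proof.
elim/last_ind: p => [|p x IH]; first by rewrite /= inE.
rewrite rcons_path last_rcons size_rcons => /andP[/IH H ex].
exact: ball_step H ex.
Qed.

Lemma ball_exists u v : exists2 n, n < #|T| & v \in ball e u n.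
Proof.
have /connectP [p pp ->] := e_conn u v.
case: (shortenP pp) => p' pp' up' _.
exists (size p'); last exact: ball_path.
move/card_uniqP: up' => /= H; rewrite -H; exact: max_card.
Qed.

Lemma dist_lt u v : dist e u v < #|T|.
Proof.
have [n nT vb] := ball_exists u v.
rewrite /dist -[X in _ < X](size_iota 0 #|T|) -has_find.
by apply/hasP; exists n; rewrite // mem_iota.
Qed.

Lemma dist_ball u v : v \in ball e u (dist e u v).
Proof.
have [n nT vb] := ball_exists u v.
have H : has (fun n => v \in ball e u n) (iota 0 #|T|).
  by apply/hasP; exists n; rewrite // mem_iota.
have := nth_find 0 H; rewrite nth_iota //.
by rewrite -[X in _ < X](size_iota 0 #|T|) -has_find.
Qed.

Lemma dist_min u v n : v \in ball e u n -> dist e u v <= n.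
Proof.
move=> vb; case: (leqP #|T| n) => [Tn|nT]; first exact: ltnW (leq_trans (dist_lt u v) Tn).
rewrite leqNgt; apply/negP => /(before_find 0); rewrite nth_iota // => /negP; by [].
Qed.

Lemma dist_self u : dist e u u = 0.
Proof. by apply/eqP; rewrite -leqn0; apply: dist_min; rewrite ball0. Qed.

Lemma dist0 u v : dist e u v = 0 -> v = u.
Proof. by move=> H; have := dist_ball u v; rewrite H ball0 => /eqP. Qed.

Lemma dist_edge u x y : e x y -> dist e u y <= (dist e u x).+1.
Proof. by move=> exy; apply: dist_min; apply: ball_step (dist_ball u x) exy. Qed.

Lemma dist_pred u v : v != u -> exists w, e v w /\ (dist e u w).+1 = dist e u v.
Proof.
move=> vu; have vb := dist_ball u v.
case Hd: (dist e u v) vb => [|m]; first by rewrite ball0 (negbTE vu).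
case/ball_S => [vm|[x [xb exv]]].
  by have := dist_min vm; rewrite Hd ltnn.
exists x; split; first by rewrite e_sym.
have h1 := dist_min xb; have h2 := dist_edge u exv; lia.
Qed.

End Dist.

Lemma belast_take (T : Type) (x : T) s j : j <= size s -> belast x (take j s) = take j (x :: s).
Proof.
elim: s x j => [|z s IH] x [|j] //= H; by rewrite IH.
Qed.

Lemma last_take (T : Type) (x : T) s j : j <= size s -> last x (take j s) = nth x (x :: s) j.
Proof.
elim: s x j => [|z s IH] x [|j] //= H; rewrite IH //=.
by case: j H => //= j H; apply: set_nth_default.
Qed.

Lemma path_take (T : Type) (r : rel T) x s j : path r x s -> path r x (take j s).
Proof. by rewrite -{1}(cat_take_drop j s) cat_path => /andP[]. Qed.

Section Cyc.
Variable T : finType.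
Variable e : rel T.
Hypothesis e_sym : symmetric e.
Hypothesis e_irr : irreflexive e.
Hypothesis e_conn : forall u v : T, connect e u v.
Variable s : T.

Definition R a b := e a b && ((dist e s b).+1 == dist e s a).

Lemma desc_exists v : exists P, path R v P /\ size P = dist e s v.
Proof.
move: {2}(dist e s v) (leqnn (dist e s v)) => N; elim: N v => [|N IH] v Hv.
  by exists [::]; split => //; move: Hv; rewrite leqn0 => /eqP.
case: (eqVneq v s) => [->|vs]; first by exists [::]; rewrite dist_self.
have [w [evw dw]] := dist_pred e_sym e_conn vs.
have [P [pP sP]] := IH w (ltac:(lia)).
exists (w :: P); split; last by rewrite /= sP.
by rewrite /= pP /R evw dw eqxx.
Qed.

Lemma pathR_nth v P : path R v P -> forall i, i <= size P ->
  dist e s (nth v (v :: P) i) + i = dist e s v.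
Proof.
elim: P v => [|w P IH] v /=; first by move=> _ [|i] //= _; rewrite addn0.
move=> /andP[/andP[_ /eqP H] pP] [|i] /= Hi; first by rewrite addn0.
rewrite -H (set_nth_default w) /=; last by lia.
have := IH w pP i Hi; lia.
Qed.

Lemma pathR_lt v P : path R v P -> forall z, z \in P -> dist e s z < dist e s v.
Proof.
elim: P v => [|w P IH] v //= /andP[/andP[_ /eqP H] pP] z; rewrite inE => /orP[/eqP->|zP].
  by rewrite -H.
by have := IH w pP z zP; lia.
Qed.

Lemma pathR_uniq v P : path R v P -> uniq (v :: P).
Proof.
move=> pP; rewrite /= (_ : v \notin P) /=.
  elim: P v pP => [|w P IH] v //= /andP[_ pP'].
  rewrite (IH w pP') andbT; apply/negP => win; have := pathR_lt pP' win; by rewrite ltnn.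
by apply/negP => vin; have := pathR_lt pP vin; rewrite ltnn.
Qed.

Lemma pathR_e v P : path R v P -> path e v P.
Proof. by apply: sub_path => a b /andP[]. Qed.

Lemma cycle_from x y PA PB :
  e y x -> path R x PA -> size PA = dist e s x -> path R y PB -> size PB = dist e s y ->
  head x PA != y -> head y PB != x ->
  exists c, is_cycle e c /\ size c <= dist e s x + dist e s y + 1.
Proof.
move=> eyx pA sA pB sB hA hB.
set A := x :: PA; set B := y :: PB.
have xy : x != y by apply/eqP => E; move: eyx; rewrite E e_irr.
have nA := pathR_nth pA; have nB := pathR_nth pB.
have uA := pathR_uniq pA; have uB := pathR_uniq pB.
have lastA : nth x A (size PA) = s.
  by apply: (dist0 e_conn); have := nA _ (leqnn _); rewrite /A; lia.
have lastB : nth y B (size PB) = s.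
  by apply: (dist0 e_conn); have := nB _ (leqnn _); rewrite /B; lia.
have hasA : has (mem B) A.
  apply/hasP; exists s; first by rewrite -lastA mem_nth /A //=.
  by rewrite /= -lastB mem_nth /B //=.
set i := find (mem B) A.
have iA : i <= size PA by have := hasA; rewrite has_find /A /=.
set a := nth x A i.
have aB : a \in B by apply: (nth_find x hasA).
set j := index a B.
have jB : j <= size PB by have := aB; rewrite -index_mem /B /=.
have bj : nth y B j = a by apply: nth_index.
have da1 := nA i iA; have da2 := nB j jB; rewrite bj in da2.
have dyx := dist_edge e_conn s eyx.
have ij2 : 2 <= i + j.
  rewrite leqNgt; apply/negP => H.
  have : [|| (i == 0) && (j == 0), (i == 0) && (j == 1) | (i == 1) && (j == 0)] by lia.
  case/or3P => /andP[/eqP i0 /eqP j0].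
  - have ax : a = x by rewrite /a i0.
    by move: xy; rewrite -ax -bj j0 /= eqxx.
  - have ax : a = x by rewrite /a i0.
    by move: hB; rewrite -ax -bj j0 /B /= -nth0 eqxx.
  - have ay : a = y by rewrite -bj j0.
    by move: hA; rewrite -ay /a i0 /A /= -nth0 eqxx.
have szc : size (take i.+1 A ++ rev (take j B)) = i.+1 + j.
  rewrite size_cat size_rev !size_takel // /B /=; lia.
exists (take i.+1 A ++ rev (take j B)); split; last by rewrite szc; lia.
rewrite /is_cycle szc.
apply/andP; split; first lia.
apply/andP; split; last first.
  rewrite cat_uniq rev_uniq !take_uniq // andbT andTb.
  apply/hasPn => z; rewrite mem_rev => zB; apply/negP => zA.
  have zB' := mem_take zB.
  have zA' := mem_take zA.
  rewrite in_take // in zA; rewrite in_take // in zB.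
  have Hi : ~ index z A < i.
    by move=> H; have := before_find x H; rewrite nth_index // => /negbT/negP; apply.
  have E : index z A = i by lia.
  have za : z = a by rewrite /a -E nth_index.
  by move: zB; rewrite za ltnn.
rewrite (cycle_path x).
have lastc : last x (take i.+1 A ++ rev (take j B)) = y.
  rewrite last_cat (take_nth x) /A /=; last by lia.
  rewrite last_rcons -/A -/a.
  case: (posnP j) => [j0|jpos]; first by rewrite j0 /= -bj j0.
  rewrite (_ : take j B = y :: take j.-1 PB) ?rev_cons ?last_rcons //.
  by rewrite /B; case: (j) jpos.
rewrite lastc cat_path; apply/andP; split.
  rewrite /A /= eyx /=; exact: path_take (pathR_e pA).
rewrite (take_nth x) /A /=; last by lia.
rewrite last_rcons -/A -/a -bj /B -(belast_take y jB) -(last_take y jB) rev_path.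
have : path e y (take j PB) by exact: path_take (pathR_e pB).
by apply: sub_path => u w /=; rewrite e_sym.
Qed.

End Cyc.

Section Main.
Variable T : finType.
Variable e : rel T.
Variable ID : T -> nat.
Hypothesis e_sym : symmetric e.
Hypothesis e_irr : irreflexive e.
Hypothesis e_conn : forall u v : T, connect e u v.
Variables (S : {set T}) (k : nat) (p : T -> T -> option T).
Hypothesis hp : valid_parents e ID S k p.

Lemma girth_le c : is_cycle e c -> oleq (girth e) (Some (size c)).
Proof.
move=> cc; have ucc : uniq c by case/andP: cc => _ /andP[].
have sc : size c < #|T|.+1.
  by rewrite ltnS; move/card_uniqP: ucc => <-; apply: max_card.
rewrite /girth (_ : size c = Ordinal sc) //.
apply: big_omin_le; first exact: mem_index_enum.
by apply/existsP; exists (in_tuple c).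
Qed.

Lemma Mval_le s x y : e y x -> s \in Uset e ID S k y -> s \in Uset e ID S k x ->
  p s x != Some y -> p s y != Some x ->
  oleq (Mval e ID S k p) (Some (dist e s x + dist e s y + 1)).
Proof.
move=> eyx sy sx h1 h2.
apply: oleq_trans (big_omin_le _ (mem_index_enum y) (erefl true)) _.
apply: oleq_trans (big_omin_le _ (mem_index_enum x) eyx) _.
apply: big_omin_le; first exact: mem_index_enum.
by rewrite inE sy sx h1 h2.
Qed.

Lemma Uset_S s v : s \in Uset e ID S k v -> s \in S.
Proof. by rewrite inE => /andP[]. Qed.

Lemma start_path s v : s \in Uset e ID S k v ->
  exists P, [/\ path (R e s) v P, size P = dist e s v &
     P = [::] \/ exists w P', P = w :: P' /\ p s v = Some w].
Proof.
move=> sv; have := hp (Uset_S sv) sv.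
case: (eqVneq v s) => [->|vs] H.
  by exists [::]; split => //; [rewrite dist_self | left].
case: H => w [pw [evw dw]].
have [P [pP sP]] := desc_exists e_sym e_conn s w.
exists (w :: P); split; last by right; exists w, P.
  by rewrite /= pP /R evw dw eqxx.
by rewrite /= sP.
Qed.

Lemma part1_cycle s x y : e y x -> s \in Uset e ID S k y -> s \in Uset e ID S k x ->
  p s x != Some y -> p s y != Some x ->
  exists c, is_cycle e c /\ size c <= dist e s x + dist e s y + 1.
Proof.
move=> eyx sy sx h1 h2.
have [PA [pA sA hA]] := start_path sx.
have [PB [pB sB hB]] := start_path sy.
have xy : x != y by apply/eqP => E; move: eyx; rewrite E e_irr.
apply: (cycle_from e_sym e_irr e_conn eyx pA sA pB sB).
  case: hA => [->|[w [P' [-> pw]]]] //=.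
  by apply/eqP => E; move: h1; rewrite pw E eqxx.
case: hB => [->|[w [P' [-> pw]]]] //=; first by rewrite eq_sym.
by apply/eqP => E; move: h2; rewrite pw E eqxx.
Qed.

Lemma part1 : oleq (girth e) (Mval e ID S k p).
Proof.
apply: big_omin_glb => y _; apply: big_omin_glb => x eyx.
apply: big_omin_glb => s /andP[]; rewrite inE => /andP[sy sx] /andP[h1 h2].
have [c [cc sc]] := part1_cycle eyx sy sx h1 h2.
apply: oleq_trans (girth_le cc) _; exact: sc.
Qed.

End Main.

Section Part2.
Variable T : finType.
Variable e : rel T.
Variable ID : T -> nat.
Hypothesis e_sym : symmetric e.
Hypothesis e_irr : irreflexive e.
Hypothesis e_conn : forall u v : T, connect e u v.
Variables (S : {set T}) (k : nat) (p : T -> T -> option T).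
Hypothesis hp : valid_parents e ID S k p.

Lemma part2_cycle s v0 c' (C := v0 :: c') :
  is_cycle e C -> (forall v, v \in C -> s \in Uset e ID S k v) ->
  oleq (Mval e ID S k p) (Some (2 * dist e s v0 + size C)).
Proof.
move=> /andP[g3 /andP[cyC uC]] cov.
set g := size C.
have gE : g = (size c').+1 by [].
set d := dist e s v0.
pose c i := nth v0 C i.
pose nx i := if i.+1 < g then i.+1 else 0.
have cin i : i < g -> c i \in C by move=> ?; apply: mem_nth.
have edge i : i < g -> e (c i) (c (nx i)).
  move=> ig; move: cyC; rewrite /C /= => /(pathP v0) H.
  have := H i; rewrite size_rcons => /(_ ig).
  rewrite -/(rcons (v0 :: c') v0) nth_rcons -/C -/g ig nth_rcons.
  rewrite /c /nx /g /C /= ltnS; case: ltnP => h //.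
  by case: ifP.
have fwd i : i < g -> dist e s (c i) <= d + i.
  elim: i => [|i IH] ig; first by rewrite addn0.
  have := dist_edge e_conn s (edge i (ltnW ig)).
  rewrite /nx ig; have := IH (ltnW ig); lia.
have bwd t : 0 < t -> t <= g -> dist e s (c (g - t)) <= d + t.
  elim: t => [|t IH] // _ tg.
  case: (posnP t) => [t0|tpos].
    rewrite t0; have := edge (g - 1) (ltac:(lia)).
    rewrite /nx (_ : (g - 1).+1 < g = false); last by lia.
    rewrite e_sym => /(dist_edge e_conn s); rewrite /c nth0 /=; lia.
  have := edge (g - t.+1) (ltac:(lia)).
  rewrite /nx (_ : (g - t.+1).+1 < g); last by lia.
  rewrite (_ : (g - t.+1).+1 = g - t); last by lia.
  rewrite e_sym => /(dist_edge e_conn s); have := IH tpos (ltnW tg); lia.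
have ebound i : i < g -> dist e s (c (nx i)) + dist e s (c i) + 1 <= 2 * d + g.
  move=> ig; rewrite /nx; case: ifP => h.
    have := fwd i ig; have := bwd (g - i.+1) (ltac:(lia)) (ltac:(lia)).
    rewrite (_ : g - (g - i.+1) = i.+1); last by lia.
    lia.
  have := fwd i ig; rewrite /c nth0 /= -/d; lia.
have nxg i : i < g -> nx i < g by move=> ig; rewrite /nx; case: ifP => // _; lia.
have good i : i < g -> p s (c (nx i)) != Some (c i) -> p s (c i) != Some (c (nx i)) ->
    oleq (Mval e ID S k p) (Some (2 * d + g)).
  move=> ig h1 h2.
  apply: oleq_trans (Mval_le (edge i ig) (cov _ (cin _ ig)) (cov _ (cin _ (nxg i ig))) h1 h2) _.
  exact: ebound.
have par_lt v u : v \in C -> p s v = Some u -> dist e s u < dist e s v.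
  move=> vC puv; have sv := cov v vC.
  have := hp (Uset_S sv) sv; case: ifP => [_|_ [w [pw [_ dw]]]]; first by rewrite puv.
  by move: puv; rewrite pw => -[<-]; lia.
pose I := 'I_(size c').+1.
have [M _ HM] := @arg_maxnP I ord0 xpredT (fun i : I => dist e s (c i)) isT.
have Mg : M < g by rewrite /g /C /=.
have maxM j : j < g -> dist e s (c j) <= dist e s (c M).
  by move=> jg; have := HM (Ordinal (jg : j < (size c').+1)) isT.
pose i2 := if M == 0 :> nat then g.-1 else M.-1.
have i2g : i2 < g by rewrite /i2; case: ifP; lia.
have nxi2 : nx i2 = M.
  have g0 : 0 < g by lia.
  rewrite /nx /i2; case: (posnP M) => [->|Mpos] /=.
    by rewrite ltnn.
  by rewrite prednK // Mg.
have np1 : p s (c (nx M)) != Some (c M).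
  apply/negP => /eqP H; have := par_lt _ _ (cin _ (nxg _ Mg)) H.
  have := maxM (nx M) (nxg _ Mg); lia.
have np2 : p s (c i2) != Some (c M).
  apply/negP => /eqP H; have := par_lt _ _ (cin _ i2g) H.
  have := maxM i2 i2g; lia.
case: (eqVneq (p s (c M)) (Some (c (nx M)))) => [E1|]; last exact: good.
case: (eqVneq (p s (c M)) (Some (c i2))) => [E2|ne2].
  have : c (nx M) = c i2 by move: E1; rewrite E2 => -[].
  move/eqP; rewrite /c nth_uniq //; last exact: nxg.
  rewrite /nx /i2; case: (posnP M) => [->|Mpos] /=.
    rewrite ifT; last by lia.
    by move/eqP; lia.
  by case: ifP => h /eqP; lia.
by apply: (good i2 i2g); rewrite nxi2.
Qed.

End Part2.
Unset Implicit Arguments. Set Strict Implicit.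

Theorem mainTheorem7 (T : finType) (e : rel T) (ID : T -> nat)
  (e_sym : symmetric e) (e_irr : irreflexive e)
  (e_conn : forall u v : T, connect e u v)
  (ID_inj : injective ID)
  (S : {set T}) (k : nat) (p : T -> T -> option T)
  (hp : valid_parents e ID S k p) :
  oleq (girth e) (Mval e ID S k p) /\
  ((exists C : seq T, is_shortest_cycle e C /\
      exists s, s \in S /\ covers e ID S k s C) ->
   exists d g : nat, dS e ID S k = Some d /\ girth e = Some g /\
     oleq (Mval e ID S k p) (Some (2 * d + g))).
Proof.
split; first exact: (part1 e_sym e_irr e_conn hp).
move=> [C [shC [s0 [s0S covC]]]].
have cC : is_cycle e C by case/andP: shC.
have ucc : uniq C by case/andP: cC => _ /andP[].
have sc : size C < #|T|.+1.
  by rewrite ltnS; move/card_uniqP: ucc => <-; apply: max_card.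
have C0 : 0 < size C by case/andP: cC => H _; apply: leq_trans H.
have hC : head s0 C \in C by move: C0; case: (C) => //= a l _; rewrite mem_head.
have dS_le : oleq (dS e ID S k) (Some (dist e s0 (head s0 C))).
  apply: oleq_trans.
    apply: (big_omin_le _ (mem_index_enum (Ordinal sc))) => //.
  apply: oleq_trans.
    apply: (big_omin_le _ (mem_index_enum (in_tuple C))) => //.
  apply: oleq_trans.
    apply: (big_omin_le _ (mem_index_enum s0)) => //.
    by rewrite /= s0S covC.
  exact: big_omin_le.
case: (big_omin_attain (index_enum _) xpredT
   (fun n : 'I_#|T|.+1 => \big[omin/None]_(t : n.-tuple T | is_shortest_cycle e t)
      \big[omin/None]_(s in S | covers e ID S k s t) dist_cycle e s t)) => [H|[n [_ _ H]]].
  by move: dS_le; rewrite /dS H.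
rewrite /dS H in dS_le *.
case: (big_omin_attain (index_enum _) (fun t : n.-tuple T => is_shortest_cycle e t)
   (fun t => \big[omin/None]_(s in S | covers e ID S k s t) dist_cycle e s t)) => [H2|[t [_ sht H2]]].
  by move: dS_le; rewrite H2.
rewrite H2 in dS_le *.
case: (big_omin_attain (index_enum _) (fun s => (s \in S) && covers e ID S k s t)
   (fun s => dist_cycle e s t)) => [H3|[s [_ /andP[sS covt] H3]]].
  by move: dS_le; rewrite H3.
rewrite H3 in dS_le *.
case: (big_omin_attain t xpredT (fun v => Some (dist e s v))) => [H4|[v0 [v0t _ H4]]].
  by move: dS_le; rewrite /dist_cycle H4.
rewrite /dist_cycle H4.
case/andP: sht => ct /eqP gt.
case: (rot_to v0t) => i c' Hrot.
exists (dist e s v0), (size t); split => //; split => //.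
have := @part2_cycle T e ID e_sym e_conn S k p hp s v0 c'.
move=> Hp2; rewrite -(size_rot i t) Hrot; apply: Hp2; rewrite -Hrot.
  move: ct; rewrite /is_cycle size_rot /ucycleb rot_cycle rot_uniq; by [].
move=> v; rewrite mem_rot => vt.
by move/allP: covt; apply.
Qed.
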